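(* Let $P_0,P_1,P_2$ be jointly distributed nonnegative random variables with $\mathbb E[P_1]>0$, and let $0<\varepsilon\le 1/10$. If $\mathbb E[P_0]\le\varepsilon$, $\mathbb E[P_1]\ge 1-\varepsilon$ and $\mathbb E[P_2]\le 1$, then there exists an outcome $o$ such that $P_0(o)\le\delta\cdot P_1(o)$, $P_2(o)\le(1+\delta)\cdot P_1(o)$, and $P_1(o)>0$, where $\delta=2\sqrt{\varepsilon}$. *)

(* Defs.v *)
From HB Require Import structures.
From mathcomp Require Import all_boot all_order all_algebra.
From mathcomp Require Import all_classical all_reals all_analysis.
Set Implicit Arguments. Unset Strict Implicit. Unset Printing Implicit Defensive.
Import Order.TTheory GRing.Theory Num.Theory.

(* Main.v *)
Require Import Defs.
From HB Require Import structures.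
From mathcomp Require Import all_boot all_order all_algebra.
From mathcomp Require Import all_classical all_reals all_analysis.
From mathcomp Require Import ring lra.
From mathcomp Require Import measurable_realfun.
Import Order.TTheory GRing.Theory Num.Theory.
Local Open Scope ring_scope.
Local Open Scope ereal_scope.

Lemma real_part (R : realType) (s a b : R) : (0 < s)%R -> (s ^+ 2 <= 1/10)%R ->
  (a * (2 * s) = 1)%R -> (b * (1 + 2 * s) = 1)%R ->
  (1 - s ^+ 2 <= a * s ^+ 2 + b * 1)%R -> False.
Proof.
move=> s0 s1 ha hb h.
have as2 : (a * s ^+ 2 = s / 2)%R.
  have -> : (a * s ^+ 2 = (a * (2 * s)) * s / 2)%R by field.
  by rewrite ha mul1r.
rewrite as2 mulr1 in h.
have hs : (s <= 1/3)%R by nra.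
have b0 : (0 < b)%R by nra.
nra.
Qed.

Theorem fact3p2 (R : realType) (d : measure_display) (T : measurableType d)
  (P : probability T R) (P0 P1 P2 : T -> R)
  (mP0 : measurable_fun setT P0) (mP1 : measurable_fun setT P1)
  (mP2 : measurable_fun setT P2)
  (nP0 : forall o, (0 <= P0 o)%R) (nP1 : forall o, (0 <= P1 o)%R)
  (nP2 : forall o, (0 <= P2 o)%R)
  (eps : R) (heps0 : (0 < eps)%R) (heps1 : (eps <= 1 / 10)%R)
  (hE1pos : 0 < \int[P]_o (P1 o)%:E)
  (hE0 : \int[P]_o (P0 o)%:E <= eps%:E)
  (hE1 : (1 - eps)%:E <= \int[P]_o (P1 o)%:E)
  (hE2 : \int[P]_o (P2 o)%:E <= 1) :
  let delta := (2 * Num.sqrt eps)%R in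
  exists o : T, (P0 o <= delta * P1 o)%R /\ (P2 o <= (1 + delta) * P1 o)%R
    /\ (0 < P1 o)%R.
Proof.
move=> delta.
set s := Num.sqrt eps.
have s0 : (0 < s)%R by rewrite sqrtr_gt0.
have ss : (s ^+ 2 = eps)%R by rewrite sqr_sqrtr // ltW.
have d0 : (0 < delta)%R by rewrite /delta mulr_gt0.
pose a := (delta^-1)%R; pose b := ((1 + delta)^-1)%R.
have a0 : (0 <= a)%R by rewrite /a invr_ge0 ltW.
have b0 : (0 <= b)%R by rewrite /b invr_ge0; nra.
apply: contrapT => Hno.
have pw : forall o, (P1 o <= a * P0 o + b * P2 o)%R.
  move=> o.
  have [p1z|p1p] := eqVneq (P1 o) 0%R.
    by rewrite p1z addr_ge0 // mulr_ge0.
  have p1pos : (0 < P1 o)%R by rewrite lt_neqAle eq_sym p1p nP1.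
  have [h0|h0] := leP (P0 o) (delta * P1 o)%R.
    have [h2|h2] := leP (P2 o) ((1 + delta) * P1 o)%R.
      by exfalso; apply: Hno; exists o.
    have : (P1 o <= b * P2 o)%R.
      rewrite /b ler_pdivlMl; last by nra.
      exact: ltW.
    move=> hh; apply: (le_trans hh); rewrite lerDr mulr_ge0 //.
  have : (P1 o <= a * P0 o)%R.
    rewrite /a ler_pdivlMl //; exact: ltW.
  move=> hh; apply: (le_trans hh); rewrite lerDl mulr_ge0 //.
have mf : measurable_fun setT (fun o => a * P0 o + b * P2 o)%R.
  apply: measurable_funD; apply: measurable_funM => //; exact: measurable_cst.
have H1 : \int[P]_o (P1 o)%:E <= \int[P]_o (a * P0 o + b * P2 o)%:E.
  apply: ge0_le_integral => //.
  - by move=> o _; rewrite lee_fin.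
  - exact/measurable_EFinP.
  - exact/measurable_EFinP.
  - by move=> o _; rewrite lee_fin.
have H2 : \int[P]_o (a * P0 o + b * P2 o)%:E =
   a%:E * \int[P]_o (P0 o)%:E + b%:E * \int[P]_o (P2 o)%:E.
  rewrite (@eq_integral _ _ _ P setT (fun o => a%:E * (P0 o)%:E + b%:E * (P2 o)%:E)); last first.
    by move=> o _; rewrite EFinD !EFinM.
  rewrite ge0_integralD //.
  - rewrite ge0_integralZl_EFin //; last exact/measurable_EFinP.
    rewrite ge0_integralZl_EFin //; last exact/measurable_EFinP.
    by move=> o _; rewrite lee_fin.
    by move=> o _; rewrite lee_fin.
  - by move=> o _; rewrite -EFinM lee_fin mulr_ge0.
  - by apply/measurable_EFinP; apply: measurable_funM => //; exact: measurable_cst.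
  - by move=> o _; rewrite -EFinM lee_fin mulr_ge0.
  - by apply/measurable_EFinP; apply: measurable_funM => //; exact: measurable_cst.
have H3 : a%:E * \int[P]_o (P0 o)%:E + b%:E * \int[P]_o (P2 o)%:E <=
    (a * eps + b * 1)%:E.
  rewrite EFinD !EFinM; apply: leeD; apply: lee_wpmul2l => //; by rewrite lee_fin.
rewrite H2 in H1; have := le_trans hE1 (le_trans H1 H3).
rewrite lee_fin -ss => hfin.
move: hfin; rewrite ss => hfin; apply: (@real_part R s a b s0 _ _ _); last by rewrite ss.
- by rewrite ss.
- by rewrite /a mulVf // gt_eqF.
- by rewrite /b mulVf // gt_eqF // addr_gt0.
Qed.
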